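(* Let $\sigma'\in\Sigma'$. Then there exists a generator $N'\in\mathrm{End}(H'_{\mathbb{Q}})$ of $\sigma'$ such that $\exp(N')\in\Gamma'$, and $\mathrm{Ad}(\gamma)\sigma'\in\Sigma'$ for every $\gamma\in\Gamma'$. Therefore $\Gamma'$ is strongly compatible with $\Sigma'$.
   Context: $H_{\mathbb{Z}}$ is a lattice with a unipotent automorphism $T$, $N=\log T$. $H'_{\mathbb{Z}}=H_{\mathbb{Z}}\oplus\mathbb{Z}e$ (an extension of $\mathbb{Z}$ by $H_{\mathbb{Z}}$, with $e$ mapping to $1$). $\Gamma'$ is the group of automorphisms of $H'_{\mathbb{Z}}$ of the form $\begin{pmatrix}T^n&b\\0&1\end{pmatrix}$ with $n\in\mathbb{Z}$, $b\in H_{\mathbb{Z}}$ (block form with respect to $H_{\mathbb{Z}}\oplus\mathbb{Z}e$). $\Sigma'$ is the set of cones $\mathbb{R}_{\ge0}N'$ where $N'\in\mathrm{End}(H'_{\mathbb{Q}})$, $N'|_{H_{\mathbb{Q}}}=N$, and $N'(e)=N(a)$ for some $a\in H_{\mathbb{Q}}$ with $(T-I)a\in H_{\mathbb{Z}}$. For $\gamma\in\Gamma'$, $\mathrm{Ad}(\gamma)\sigma'=\gamma\sigma'\gamma^{-1}$. Strong compatibility of $\Gamma'$ with $\Sigma'$ means: $\Sigma'$ is stable under $\mathrm{Ad}(\Gamma')$ and each cone of $\Sigma'$ is generated by elements $N'$ with $\exp(N')\in\Gamma'$. *)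

(* Defs.v *)
From HB Require Import structures.
From mathcomp Require Import all_boot all_order all_algebra.
From mathcomp Require Import classical_sets reals.
Set Implicit Arguments. Unset Strict Implicit. Unset Printing Implicit Defensive.
Import Order.TTheory GRing.Theory Num.Theory.
Local Open Scope ring_scope.
Local Open Scope classical_set_scope.

(* The lattice H_Z is Z^n (column vectors); H'_Z = H_Z (+) Z e = Z^(n+1),
   with e the last basis vector.  Endomorphisms are (n+1)x(n+1) matrices
   acting on column vectors, block form w.r.t. H (+) Z e. *)

(* logarithm of a unipotent n x n matrix: the series terminates at (M-1)^n *)
Definition matlog (R : realType) (m : nat) (M : 'M[R]_m) : 'M[R]_m :=
  \sum_(1 <= k < m.+1) (((-1) ^+ k.+1) / k%:R) *: (M - 1%:M) ^+ k.

(* exponential of a nilpotent m x m matrix: the series terminates at A^m *)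
Definition matexp (R : realType) (m : nat) (A : 'M[R]_m) : 'M[R]_m :=
  \sum_(k < m.+1) (k`!%:R)^-1 *: A ^+ k.

Definition nilpotent_mx (R : realType) (m : nat) (A : 'M[R]_m) : Prop :=
  exists k : nat, A ^+ k = 0.

Definition powz (R : realType) (m : nat) (M : 'M[R]_m) (k : int) : 'M[R]_m :=
  match k with
  | Posz j => M ^+ j
  | Negz j => (invmx M) ^+ j.+1
  end.

Definition TR (R : realType) (n : nat) (T : 'M[int]_n) : 'M[R]_n :=
  map_mx (fun z : int => z%:~R) T.

Definition logT (R : realType) (n : nat) (T : 'M[int]_n) : 'M[R]_n :=
  matlog (TR R T).

Definition Gamma' (R : realType) (n : nat) (T : 'M[int]_n)
    (g : 'M[R]_(n + 1)) : Prop :=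
  exists (k : int) (b : 'cV[int]_n),
    g = block_mx (powz (TR R T) k) (map_mx (fun z : int => z%:~R) b) 0 1%:M.

Definition ray (R : realType) (m : nat) (A : 'M[R]_m) : set 'M[R]_m :=
  [set t *: A | t in [set t : R | 0 <= t]].

(* Sigma' : cones R_{>=0} N' with N'|_{H_Q} = N and N'(e) = N(a),
   a in H_Q with (T - I) a in H_Z. In block form N' = [[N, N a],[0,0]]. *)
Definition Sigma' (R : realType) (n : nat) (T : 'M[int]_n)
    (s : set 'M[R]_(n + 1)) : Prop :=
  exists a : 'cV[rat]_n,
    (forall i j, ((TR R T - 1%:M) *m map_mx (fun q : rat => ratr q) a) i j
                   \is a Num.int) /\
    s = ray (block_mx (logT R T) (logT R T *m map_mx (fun q : rat => ratr q) a)
                      0 0).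

Definition Ad (R : realType) (m : nat) (g : 'M[R]_m) (s : set 'M[R]_m)
  : set 'M[R]_m := [set g *m X *m invmx g | X in s].

Definition cone_gen (R : realType) (m : nat) (S : set 'M[R]_m) : set 'M[R]_m :=
  [set X | exists (p : nat) (c : 'I_p -> R) (v : 'I_p -> 'M[R]_m),
             (forall i, 0 <= c i /\ S (v i)) /\ X = \sum_(i < p) c i *: v i].

Definition exp_in (R : realType) (m : nat) (Gam : 'M[R]_m -> Prop)
    (N : 'M[R]_m) : Prop :=
  (exists Nq : 'M[rat]_m, N = map_mx (fun q : rat => ratr q) Nq) /\
  nilpotent_mx N /\ Gam (matexp N).

Definition strongly_compatible (R : realType) (m : nat)
    (Gam : 'M[R]_m -> Prop) (Sig : set 'M[R]_m -> Prop) : Prop :=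
  (forall s, Sig s -> forall g, Gam g -> Sig (Ad g s)) /\
  (forall s, Sig s -> exists S : set 'M[R]_m,
       (forall N, S N -> exp_in Gam N) /\ s = cone_gen S).

(* Main.v *)
Require Import Defs.
From HB Require Import structures.
From mathcomp Require Import all_boot all_order all_algebra.
From mathcomp Require Import classical_sets reals.
From mathcomp Require Import ring.
Import Order.TTheory GRing.Theory Num.Theory.
Local Open Scope ring_scope.
Local Open Scope classical_set_scope.


Section Poly.
Variable F : numFieldType.
Implicit Types p q : {poly F}.

Definition lowz (j : nat) p := forall i, (i < j)%N -> p`_i = 0.

Lemma lowzD j p q : lowz j p -> lowz j q -> lowz j (p + q).
Proof. by move=> hp hq i hi; rewrite coefD hp ?hq ?addr0. Qed.
Lemma lowzN j p : lowz j p -> lowz j (- p).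
Proof. by move=> hp i hi; rewrite coefN hp ?oppr0. Qed.
Lemma lowzB j p q : lowz j p -> lowz j q -> lowz j (p - q).
Proof. by move=> hp hq; apply: lowzD => //; apply: lowzN. Qed.
Lemma lowzMl j p q : lowz j q -> lowz j (p * q).
Proof.
move=> hq i hi; rewrite coefM big1 // => k _; rewrite hq ?mulr0 //.
by apply: leq_ltn_trans hi; rewrite leq_subr.
Qed.
Lemma lowzMr j p q : lowz j q -> lowz j (q * p).
Proof. by move=> hq; rewrite mulrC; apply: lowzMl. Qed.
Lemma lowzXn j p : lowz j ('X^j * p).
Proof. by move=> i hi; rewrite coefXnM hi. Qed.
Lemma lowz_le j k p : (k <= j)%N -> lowz j p -> lowz k p.
Proof. by move=> hk hp i hi; apply: hp; apply: leq_trans hk. Qed.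
Lemma lowzE j p : lowz j p -> p = drop_poly j p * 'X^j.
Proof.
move=> hp; rewrite -{1}(poly_take_drop j p).
suff -> : take_poly j p = 0 by rewrite add0r.
by apply/polyP => i; rewrite coef_take_poly coef0; case: ifP => // /hp.
Qed.

Definition Lp (m : nat) : {poly F} :=
  \sum_(1 <= k < m.+1) (((-1) ^+ k.+1) / k%:R) *: 'X^k.
Definition Ep (M : nat) p : {poly F} := \sum_(k < M.+1) (k`!%:R)^-1 *: p ^+ k.

Lemma Lp_X m : exists L0, Lp m = 'X * L0.
Proof.
exists (\sum_(1 <= k < m.+1) (((-1) ^+ k.+1) / k%:R) *: 'X^(k.-1)).
rewrite /Lp mulr_sumr; apply: eq_big_nat => k /andP[k1 _].
by rewrite -scalerAr -exprS prednK.
Qed.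

Lemma lowz_Lpow m j : lowz j (Lp m ^+ j).
Proof.
have [L0 ->] := Lp_X m; rewrite exprMn_comm; last exact: mulrC.
exact: lowzXn.
Qed.

Lemma geom (y : {poly F}) m : (1 - y) * \sum_(i < m) y ^+ i = 1 - y ^+ m.
Proof.
elim: m => [|m IH]; first by rewrite big_ord0 mulr0 expr0 subrr.
rewrite big_ord_recr /= mulrDr IH exprS mulrBl mul1r.
by rewrite addrA subrK.
Qed.

Lemma derivLp m : (1 + 'X) * (Lp m)^`() = 1 - (- 'X) ^+ m.
Proof.
rewrite -geom opprK; congr (_ * _).
rewrite /Lp raddf_sum /= big_add1 /= big_mkord; apply: eq_bigr => i _.
rewrite derivZ derivXn /= -scaler_nat scalerA.
rewrite -mulrA mulVf ?pnatr_eq0 // mulr1 exprNn !exprS mulrA mulrNN !mul1r.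
by rewrite expr1n mulr1 -exprZn scaleN1r.
Qed.

Lemma derivEp M q : (Ep M q)^`() = q^`() * (Ep M q - (M`!%:R)^-1 *: q ^+ M).
Proof.
rewrite /Ep raddf_sum /= big_ord_recl /= derivZ deriv_exp mulr0n scaler0 add0r.
rewrite big_ord_recr /= addrK mulr_sumr; apply: eq_bigr => i _.
rewrite derivZ deriv_exp /= /bump /= add1n add0n.
rewrite -scalerAr -scaler_nat scalerA.
congr (_ *: _); rewrite factS natrM invfM mulrAC.
by rewrite mulVf ?pnatr_eq0 // mul1r.
Qed.

Lemma key m M : (m <= M)%N -> lowz m.+1 (Ep M (Lp m) - (1 + 'X)).
Proof.
move=> hmM.
set L := Lp m; set E := Ep M L; set G := E - (1 + 'X).
have hode : lowz m ((1 + 'X) * G^`() - G).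
  have -> : G^`() = E^`() - 1.
    by rewrite /G derivB derivD -[1]/(1%:P) derivC derivX add0r.
  rewrite derivEp -/E.
  set c := (M`!%:R)^-1 *: L ^+ M.
  set D := L^`().
  have -> : (1 + 'X) * (D * (E - c) - 1) - G = ((1 + 'X) * D) * (E - c) - E.
    by rewrite /G; ring.
  rewrite derivLp.
  have -> : (1 - (- 'X) ^+ m) * (E - c) - E =
            - c - (- 'X) ^+ m * (E - c) by ring.
  apply: lowzB; first apply: lowzN.
    rewrite /c -mul_polyC; apply: lowzMl; apply: (lowz_le _ _ _ hmM); exact: lowz_Lpow.

  by apply: lowzMr; rewrite exprNn -[X in _ * X]mulr1; apply: lowzMl; exact: lowzXn.
have G0 : G`_0 = 0.
  rewrite /G /E /Ep coefB coef_sum big_ord_recl /= big1 => [|i _]; last first.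
    by rewrite coefZ lowz_Lpow ?mulr0.
  by rewrite coefZ expr0 fact0 invr1 mul1r coefD coefX coef1 !addr0 subrr.
suff H : forall i, (i <= m)%N -> G`_i = 0 by move=> i; rewrite ltnS; apply: H.
elim=> [|i IH] hi //.
have := hode i hi.
rewrite coefB mulrDl mul1r coefD coefXM !coef_deriv IH ?(ltnW hi) // subr0.
case: i IH hi => [|i] IH hi /=.
  by rewrite addr0 => /eqP; rewrite mulrn_eq0 /= => /eqP.
rewrite IH ?(ltnW hi) // mul0rn addr0.
by move=> /eqP; rewrite mulrn_eq0 /= => /eqP.
Qed.
End Poly.


Lemma nilp_mx (F : fieldType) n' (A : 'M[F]_n'.+1) k : A ^+ k = 0 -> A ^+ n'.+1 = 0.
Proof.
move=> hk.
have hd : mxminpoly A %| ('X - 0%:P) ^+ k.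
  by apply: mxminpoly_min; rewrite subr0 rmorphXn /= horner_mx_X.
have [j hj /eqpP [[c1 c2] /andP [c10 c20] /= hc]] := dvdp_exp_XsubCP hd.
rewrite subr0 in hc.
have hsz : (j <= n'.+1)%N.
  have := congr1 (fun p : {poly F} => size p) hc; rewrite /=; rewrite !size_scale // size_polyXn => hs.
  have := dvdp_leq _ (mxminpoly_dvd_char A).
  rewrite hs size_char_poly ltnS; apply.
  by rewrite -size_poly_eq0 size_char_poly.
have hAj : A ^+ j = 0.
  have := congr1 (horner_mx A) hc.
  rewrite !linearZ /= mx_root_minpoly scaler0 rmorphXn /= horner_mx_X => /eqP.
  by rewrite eq_sym scaler_eq0 (negPf c20) /= => /eqP.
have -> : A ^+ n'.+1 = A ^+ (n'.+1 - j) * A ^+ j by rewrite -exprD subnK.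
by rewrite hAj mulr0.
Qed.

Lemma mapX (aR rR : pzSemiRingType) (f : {rmorphism aR -> rR}) n (A : 'M[aR]_n) k :
  map_mx f (A ^+ k) = (map_mx f A) ^+ k.
Proof.
elim: k => [|k IH]; first by rewrite !expr0 -!idmxE map_mx1.
by rewrite !exprS -!mulmxE map_mxM IH.
Qed.

Section M.
Variable R : realType.
Lemma TRX n (T : 'M[int]_n) k : TR R (T ^+ k) = (TR R T) ^+ k.
Proof. exact: mapX. Qed.
End M.


Lemma TRB1 (R : realType) m (A : 'M[int]_m) : TR R (A - 1%:M) = TR R A - 1%:M.
Proof. by apply/matrixP => i j; rewrite !mxE rmorphB /= rmorphMn rmorph1. Qed.

Lemma logT_h (R : realType) n' (T : 'M[int]_n'.+1) :
  logT R T = horner_mx (TR R T - 1%:M) (Lp R n'.+1).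
Proof.
rewrite /logT /matlog /Lp linear_sum; apply: eq_bigr => k _.
by rewrite linearZ /= rmorphXn /= horner_mx_X.
Qed.

Lemma expN_h (R : realType) n' (T : 'M[int]_n'.+1) :
  (TR R T - 1%:M) ^+ n'.+1 = 0 ->
  \sum_(k < (n'.+1 + 1).+1) (k`!%:R)^-1 *: (logT R T) ^+ k = TR R T.
Proof.
move=> hU.
have hk := @key R n'.+1 (n'.+1 + 1)%N (leq_addr _ _).
have hE := @lowzE R _ _ hk; rewrite -/(n'.+2) in hE; move: hE; set Q := drop_poly _ _ => hE.
have hE' : Ep R (n'.+1 + 1) (Lp R n'.+1) = 1 + 'X + Q * 'X^(n'.+2).
  by rewrite -hE addrC subrK.
have -> : \sum_(k < (n'.+1 + 1).+1) (k`!%:R)^-1 *: (logT R T) ^+ k =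
          horner_mx (TR R T - 1%:M) (Ep R (n'.+1 + 1) (Lp R n'.+1)).
  rewrite /Ep linear_sum /=.
  by apply: eq_bigr => k _; rewrite linearZ /= rmorphXn /= logT_h.
rewrite hE' !rmorphD /= rmorphM /= rmorphXn /= horner_mx_X rmorph1.
by rewrite exprS hU mulr0 mulr0 addr0 -idmxE addrC subrK.
Qed.

Lemma Nnil_h (R : realType) n' (T : 'M[int]_n'.+1) :
  (TR R T - 1%:M) ^+ n'.+1 = 0 -> (logT R T) ^+ n'.+1 = 0.
Proof.
move=> hU; rewrite logT_h; have [L0 ->] := Lp_X R n'.+1.
set h := horner_mx (TR R T - 1%:M).
have hc : GRing.comm (TR R T - 1%:M) (h L0).
  rewrite /GRing.comm -[X in X * _ = _](horner_mx_X (TR R T - 1%:M)) -/h.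
  by rewrite -rmorphM mulrC rmorphM /= /h horner_mx_X.
by move: hc; rewrite /h rmorphM /= horner_mx_X => hc; rewrite exprMn_comm ?hU ?mul0r.
Qed.

Lemma U_nil_g (R : realType) n (T : 'M[int]_n) :
  (exists k : nat, (T - 1%:M) ^+ k = 0) -> (TR R T - 1%:M) ^+ n = 0.
Proof.
case: n T => [|n'] T0 [k hk]; first by apply/matrixP => -[].
apply: (@nilp_mx _ _ _ k).
by rewrite -TRB1 -TRX hk; apply/matrixP => i j; rewrite !mxE.
Qed.

Lemma N_nil (R : realType) n (T : 'M[int]_n) :
  (exists k : nat, (T - 1%:M) ^+ k = 0) -> (logT R T) ^+ n = 0.
Proof.
move=> h; have := @U_nil_g R _ _ h.
case: n T h => [|n'] T h hU; first by apply/matrixP => -[].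
exact: Nnil_h.
Qed.

Lemma expN (R : realType) n (T : 'M[int]_n) :
  (exists k : nat, (T - 1%:M) ^+ k = 0) ->
  \sum_(k < (n + 1).+1) (k`!%:R)^-1 *: (logT R T) ^+ k = TR R T.
Proof.
move=> h; have := @U_nil_g R _ _ h.
case: n T h => [|n'] T h hU; first by apply/matrixP => -[].
exact: expN_h.
Qed.

Section Blocks.
Variable R : realType.
Variable n : nat.
Definition Np (N : 'M[R]_n) (v : 'cV[R]_n) : 'M[R]_(n + 1) :=
  block_mx N (N *m v) 0 0.

Lemma Np_pow N v k : (Np N v) ^+ k.+1 = Np (N ^+ k.+1) v.
Proof.
elim: k => [|k IH]; first by rewrite !expr1.
rewrite exprS IH -mulmxE /Np mulmx_block.
by rewrite !mulmx0 !mul0mx !addr0 mulmxA mulmxE -exprS.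
Qed.

Lemma Np_sum (I : Type) (r : seq I) (c : I -> R) (A : I -> 'M[R]_n) v :
  \sum_(i <- r) c i *: Np (A i) v = Np (\sum_(i <- r) c i *: A i) v.
Proof.
elim: r => [|x r IH]; first by rewrite !big_nil /Np mul0mx block_mx0.
rewrite !big_cons IH /Np scale_block_mx add_block_mx !scaler0 !addr0.
by rewrite mulmxDl scalemxAl.
Qed.

Lemma matexp_Np N v :
  matexp (Np N v) =
  block_mx (\sum_(k < (n + 1).+1) (k`!%:R)^-1 *: N ^+ k)
           ((\sum_(k < (n + 1).+1) (k`!%:R)^-1 *: N ^+ k - 1%:M) *m v) 0 1%:M.
Proof.
rewrite /matexp big_ord_recl /= expr0 fact0 invr1 scale1r.
under eq_bigr do rewrite Np_pow.
rewrite Np_sum big_ord_recl /= expr0 fact0 invr1 scale1r.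
rewrite /bump /=; under eq_bigr do rewrite add1n.
rewrite -!idmxE addrAC subrr add0r (scalar_mx_block n 1 1) /Np add_block_mx !add0r addr0.
by [].
Qed.
End Blocks.

Section Main.
Variable R : realType.
Variable n : nat.
Variable T : 'M[int]_n.
Hypothesis hTunip : exists k : nat, (T - 1%:M) ^+ k = 0.

Local Notation TT := (TR R T).
Local Notation U := (TR R T - 1%:M).
Local Notation N := (logT R T).

Lemma U_nil : U ^+ n = 0.
Proof.
case: n T hTunip => [|n'] T0 [k hk]; first by apply/matrixP => -[].
apply: (@nilp_mx _ _ _ k).
by rewrite -TRB1 -TRX hk; apply/matrixP => i j; rewrite !mxE.
Qed.


End Main.


Lemma inv_uniq (F : comUnitRingType) m (A B : 'M[F]_m) : A *m B = 1%:M -> invmx A = B.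
Proof.
move=> hAB; have [uA _] := mulmx1_unit hAB.
by rewrite -[invmx A]mulmx1 -hAB mulmxA mulVmx ?mul1mx.
Qed.

Lemma ray_Ad (R : realType) m (g ginv A : 'M[R]_m) :
  invmx g = ginv -> Ad g (ray A) = ray (g *m A *m ginv).
Proof.
move=> hg; rewrite /Ad hg /ray; apply/seteqP; split => X /=.
  case=> Y [t t0 <-] <-; exists t => //.
  by rewrite scalemxAl scalemxAr.
case=> t t0 <-; exists (t *: A); first by exists t.
by rewrite scalemxAl scalemxAr.
Qed.

Lemma ray_cone (R : realType) m (A : 'M[R]_m) : ray A = cone_gen [set A].
Proof.
rewrite /ray /cone_gen; apply/seteqP; split => X /=.
  case=> t t0 <-; exists 1%N, (fun _ => t), (fun _ => A); split => //.
  by rewrite big_ord1.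
case=> p [c [v [hv ->]]]; exists (\sum_(i < p) c i).
  by apply: sumr_ge0 => i _; case: (hv i).
rewrite scaler_suml; apply: eq_bigr => i _; by case: (hv i) => _ ->.
Qed.

Lemma TR1 (R : realType) m : TR R (1%:M : 'M[int]_m) = 1%:M.
Proof. by apply/matrixP => i j; rewrite !mxE rmorphMn rmorph1. Qed.

Lemma TRM (R : realType) m (A B : 'M[int]_m) : TR R (A *m B) = TR R A *m TR R B.
Proof. exact: map_mxM. Qed.

Lemma TRinv (R : realType) m (T : 'M[int]_m) : T \in unitmx ->
  invmx (TR R T) = TR R (invmx T).
Proof. by move=> hT; apply: inv_uniq; rewrite -TRM mulmxV // TR1. Qed.

Definition Lq (n : nat) (T : 'M[int]_n) : 'M[rat]_n :=
  \sum_(1 <= k < n.+1) (((-1) ^+ k.+1) / k%:R) *: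
     (map_mx (fun z : int => z%:~R) T - 1%:M) ^+ k.

Lemma ratTR (R : realType) m p (M : 'M[int]_(m, p)) :
  map_mx (fun q : rat => (ratr q : R)) (map_mx (fun z : int => z%:~R) M) =
  map_mx (fun z : int => z%:~R) M.
Proof. by apply/matrixP => i j; rewrite !mxE ratr_int. Qed.

Lemma map_Lq (R : realType) n (T : 'M[int]_n) :
  map_mx (fun q : rat => (ratr q : R)) (@Lq n T) = logT R T.
Proof.
rewrite /Lq /logT /matlog map_mx_sum; apply: eq_bigr => k _.
rewrite map_mxZ mapX map_mxB map_mx1 ratTR.
by rewrite rmorphM /= fmorphV rmorphXn rmorphN1 rmorph_nat.
Qed.


Arguments Np {R n} N v.

Lemma comm_logT (R : realType) n (T : 'M[int]_n) (P : 'M[R]_n) :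
  P *m TR R T = TR R T *m P -> P *m logT R T = logT R T *m P.
Proof.
move=> hc.
have hc' : GRing.comm P (TR R T - 1%:M).
  rewrite /GRing.comm -!mulmxE mulmxBr mulmxBl hc mulmx1 mul1mx //.
rewrite /logT /matlog mulmx_sumr mulmx_suml; apply: eq_bigr => k _.
rewrite -scalemxAr -scalemxAl; congr (_ *: _).
by rewrite !mulmxE; apply: commrX.
Qed.

Lemma part_exp (R : realType) n (T : 'M[int]_n)
    (hTunip : exists k : nat, (T - 1%:M) ^+ k = 0) (v : 'cV[R]_n) :
  (forall i j, ((TR R T - 1%:M) *m v) i j \is a Num.int) ->
  nilpotent_mx (Np (logT R T) v) /\ Gamma' T (matexp (Np (logT R T) v)).
Proof.
move=> hint; split.
  exists n.+1; rewrite Np_pow exprSr N_nil // mul0r /Np mul0mx.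
  exact: block_mx0.
rewrite matexp_Np expN //.
exists 1, (\matrix_(i, j) Num.floor (((TR R T - 1%:M) *m v) i j)).
congr block_mx.

by apply/matrixP => i j; rewrite [in RHS]mxE [in RHS]mxE floorK //; apply: hint.

Qed.

Definition Pzf n (T : 'M[int]_n) (k : int) :=
  match k with Posz j => T ^+ j | Negz j => (invmx T) ^+ j.+1 end.
Definition Qzf n (T : 'M[int]_n) (k : int) :=
  match k with Posz j => (invmx T) ^+ j | Negz j => T ^+ j.+1 end.

Lemma Pz_pow (R : realType) n (T : 'M[int]_n) k : T \in unitmx ->
  powz (TR R T) k = TR R (@Pzf n T k).
Proof. by move=> hT; case: k => j; rewrite /powz /Pzf ?TRX // TRinv // TRX. Qed.

Lemma PQ n (T : 'M[int]_n) k : T \in unitmx -> @Pzf n T k *m @Qzf n T k = 1%:M.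
Proof.
move=> hTunit.
have hTi : T *m invmx T = 1%:M := mulmxV hTunit.
have hiT : invmx T *m T = 1%:M := mulVmx hTunit.
have hcT : GRing.comm T (invmx T) by rewrite /GRing.comm -!mulmxE hTi hiT.
case: k => j; rewrite /Pzf /Qzf mulmxE -exprMn_comm -?mulmxE ?hTi ?hiT
     ?idmxE ?expr1n //; exact: commr_sym.
Qed.

Lemma Pz_comm n (T : 'M[int]_n) k : T \in unitmx -> @Pzf n T k *m T = T *m @Pzf n T k.
Proof.
move=> hTunit.
have hTi : T *m invmx T = 1%:M := mulmxV hTunit.
have hiT : invmx T *m T = 1%:M := mulVmx hTunit.
have hcT : GRing.comm T (invmx T) by rewrite /GRing.comm -!mulmxE hTi hiT.
case: k => j; rewrite /Pzf !mulmxE; apply: commr_sym; apply: commrX => //.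
Qed.

Lemma part_Ad (R : realType) n (T : 'M[int]_n) (hTunit : T \in unitmx)
    (a : 'cV[rat]_n) :
  (forall i j, ((TR R T - 1%:M) *m map_mx (fun q : rat => (ratr q : R)) a) i j
      \is a Num.int) ->
  forall g, Gamma' T g ->
  Sigma' T (Ad g (ray (Np (logT R T) (map_mx (fun q : rat => (ratr q : R)) a)))).
Proof.
move=> hint g [k [b ->]].
set Pz := @Pzf n T k; set Qz := @Qzf n T k.
have hP := @Pz_pow R n T k hTunit.
have hPQ := @PQ n T k hTunit.
have hcP := @Pz_comm n T k hTunit.
have hcPR : TR R Pz *m TR R T = TR R T *m TR R Pz by rewrite -!TRM hcP.
have hPQr : TR R Pz *m TR R Qz = 1%:M by rewrite -TRM hPQ TR1.
set P := TR R Pz in hP hcPR hPQr *; set Q := TR R Qz in hPQr *.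
set B := map_mx (fun z : int => (z%:~R : R)) b.
set N := logT R T; set v := map_mx (fun q : rat => (ratr q : R)) a.
set ginv := block_mx Q (- (Q *m B)) 0 (1%:M : 'M[R]_1).
have hginv : invmx (block_mx (powz (TR R T) k) B 0 1%:M) = ginv.
  apply: inv_uniq; rewrite hP /ginv mulmx_block !mul0mx !mulmx0 !mul1mx !addr0 !add0r.
  rewrite mulmxN mulmxA hPQr mul1mx mulmx1 addNr.
  by rewrite (scalar_mx_block n 1 1).
rewrite (@ray_Ad R _ _ _ _ hginv).
have hPN : P *m N = N *m P := @comm_logT R _ _ _ hcPR.
have -> : block_mx (powz (TR R T) k) B 0 1%:M *m Np N v *m ginv = Np N (P *m v - B).
  rewrite hP /Np /ginv !mulmx_block.
  rewrite !mulmx0 !mul0mx !addr0 ?mulmx0 ?mul0mx ?addr0 !mulmx1.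
  congr block_mx; first by rewrite hPN -mulmxA hPQr mulmx1.
  rewrite hPN mulmxBr mulmxN addrC; congr (_ + _); first by rewrite !mulmxA hPN.
  by rewrite !mulmxA -(mulmxA N P Q) hPQr mulmx1.
have hv : map_mx (fun q : rat => (ratr q : R))
    (map_mx (fun z : int => z%:~R) Pz *m a - map_mx (fun z : int => z%:~R) b) =
    P *m v - B.
  by rewrite map_mxB map_mxM !ratTR.
exists (map_mx (fun z : int => z%:~R) Pz *m a - map_mx (fun z : int => z%:~R) b).
rewrite hv; split; last by [].
pose c := \matrix_(i, j) Num.floor (((TR R T - 1%:M) *m v) i j).
have hc : map_mx (fun z : int => (z%:~R : R)) c = (TR R T - 1%:M) *m v.
  by apply/matrixP => i j; rewrite [in LHS]mxE [in LHS]mxE floorK //; apply: hint.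
have -> : (TR R T - 1%:M) *m (P *m v - B) =
          map_mx (fun z : int => (z%:~R : R)) (Pz *m c - (T - 1%:M) *m b).
  rewrite map_mxB !map_mxM hc.
  have -> : map_mx (fun z : int => (z%:~R : R)) (T - 1%:M) = TR R T - 1%:M.
    exact: TRB1.
  rewrite -/P -/B mulmxBr !mulmxA; congr (_ - _).
  by rewrite mulmxBl mulmxBr hcPR mulmx1 mul1mx.
by move=> i j; rewrite mxE; apply: intr_int.
Qed.

Theorem mainTheorem2 (R : realType) (n : nat) (T : 'M[int]_n)
    (hTunit : T \in unitmx) (hTunip : exists k : nat, (T - 1%:M) ^+ k = 0) :
  (forall s : set 'M[R]_(n + 1), Sigma' T s ->
     (exists Nq : 'M[rat]_(n + 1),
        s = ray (map_mx (fun q : rat => (ratr q : R)) Nq) /\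
        nilpotent_mx (map_mx (fun q : rat => (ratr q : R)) Nq) /\
        Gamma' T (matexp (map_mx (fun q : rat => (ratr q : R)) Nq))) /\
     (forall g, Gamma' T g -> Sigma' T (Ad g s))) /\
  strongly_compatible (@Gamma' R n T) (@Sigma' R n T).
Proof.
have part1 : forall s : set 'M[R]_(n + 1), Sigma' T s ->
     (exists Nq : 'M[rat]_(n + 1),
        s = ray (map_mx (fun q : rat => (ratr q : R)) Nq) /\
        nilpotent_mx (map_mx (fun q : rat => (ratr q : R)) Nq) /\
        Gamma' T (matexp (map_mx (fun q : rat => (ratr q : R)) Nq))) /\
     (forall g, Gamma' T g -> Sigma' T (Ad g s)).
  move=> s [a [hint ->]].
  have hNq : map_mx (fun q : rat => (ratr q : R))
               (block_mx (@Lq n T) (@Lq n T *m a) 0 0) =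
             Np (logT R T) (map_mx (fun q : rat => (ratr q : R)) a).
    by rewrite map_block_mx map_mxM map_Lq !map_mx0.
  have [hnil hG] := @part_exp R n T hTunip _ hint.
  split.
    exists (block_mx (@Lq n T) (@Lq n T *m a) 0 0); rewrite hNq; split => //.
  move=> g hg; exact: (@part_Ad R n T hTunit a hint g hg).
split; first exact: part1.
split.
  by move=> s hs g hg; apply: (proj2 (part1 s hs)).
move=> s hs; have [[Nq [hs' [hnil hG]]] _] := part1 s hs.
exists [set map_mx (fun q : rat => (ratr q : R)) Nq]; split.
  by move=> X ->; split; [exists Nq | split].
by rewrite hs'; apply: ray_cone.
Qed.
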